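(* For every formula $A$ of the language $\mathcal{L}^{\Box\triangle}$: $\mathsf{CS}\vdash A$ if and only if $\mathrm{labCS}^\infty\vdash A$.
   Context: Formulas ($\mathcal{L}^{\Box\triangle}$): fix a countable set $\mathtt{Prop}$ of propositional atoms; formulas are generated by $A ::= \bot \mid p \mid A \to A \mid \Box A \mid \triangle A$ with $p \in \mathtt{Prop}$. The logic $\mathsf{CS}$ is the smallest set of formulas containing all classical propositional tautologies and all instances of the schemas $\Box(A\to B)\to(\Box A\to\Box B)$, $\Box(\Box A\to A)\to\Box A$, $\Box A\to\triangle\Box A$, $\triangle(A\to B)\to(\triangle A\to\triangle B)$, $\triangle(\triangle A\to A)\to\triangle A$, $\triangle A\to\Box\triangle A$, and closed under modus ponens (from $A\to B$ and $A$ infer $B$) and the necessitation rules (from $A$ infer $\Box A$; from $A$ infer $\triangle A$). $\mathsf{CS}\vdash A$ means $A\in\mathsf{CS}$. Labelled sequents: fix a countable set $\mathtt{Lab}$ of labels. A labelled formula is $x:A$ with $x\in\mathtt{Lab}$ and $A$ a formula; a relational atom is $xRy$ or $xSy$ with $x,y \in \mathtt{Lab}$. A sequent $\mathcal{R},\Gamma\Rightarrow\Omega$ consists of a finite multiset $\mathcal{R}$ of relational atoms and finite multisets $\Gamma,\Omega$ of labelled formulas; commas denote multiset union. Rules of $\mathrm{labCS}^\infty$ (premisses above, conclusion below; $\mathcal{R},\Gamma,\Omega$ arbitrary): (Id) no premiss, conclusion $\mathcal{R},\Gamma,x:p\Rightarrow x:p,\Omega$ with $p\in\mathtt{Prop}$;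 ($\bot$) no premiss, conclusion $\mathcal{R},\Gamma,x:\bot\Rightarrow\Omega$; ($\to$R) from $\mathcal{R},\Gamma,x:A\Rightarrow x:B,\Omega$ infer $\mathcal{R},\Gamma\Rightarrow x:A\to B,\Omega$; ($\to$L) from $\mathcal{R},\Gamma\Rightarrow x:A,\Omega$ and $\mathcal{R},\Gamma,x:B\Rightarrow\Omega$ infer $\mathcal{R},\Gamma,x:A\to B\Rightarrow\Omega$; ($\Box$R) from $\mathcal{R},xRy,\Gamma\Rightarrow y:A,\Omega$ infer $\mathcal{R},\Gamma\Rightarrow x:\Box A,\Omega$, provided $y$ does not occur in the conclusion; ($\Box$L) from $\mathcal{R},xRy,x:\Box A,y:A,\Gamma\Rightarrow\Omega$ infer $\mathcal{R},xRy,x:\Box A,\Gamma\Rightarrow\Omega$; ($\triangle$R) from $\mathcal{R},xSy,\Gamma\Rightarrow y:A,\Omega$ infer $\mathcal{R},\Gamma\Rightarrow x:\triangle A,\Omega$, provided $y$ does not occur in the conclusion; ($\triangle$L) from $\mathcal{R},xSy,x:\triangle A,y:A,\Gamma\Rightarrow\Omega$ infer $\mathcal{R},xSy,x:\triangle A,\Gamma\Rightarrow\Omega$; ($\mathrm{trans}_{\circ\bullet}$, for each $\circ,\bullet\in\{R,S\}$) from $\mathcal{R},x\circ y,y\bullet z,x\bullet z,\Gamma\Rightarrow\Omega$ infer $\mathcal{R},x\circ y,y\bullet z,\Gamma\Rightarrow\Omega$. Proofs: a pre-proof is a possibly infinite tree of sequents in which each node is the conclusion of an instance of a rule whose premisses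 are exactly its children. A trace along an infinite branch $(\mathfrak{S}_i)_{i<\omega}$ with $\mathfrak{S}_i=\mathcal{R}_i,\Gamma_i\Rightarrow\Omega_i$ is a sequence of labels $(x_i)_{i<\omega}$ such that for each $i$: $x_{i+1}=x_i$, or $x_iRx_{i+1}\in\mathcal{R}_i$, or $x_iSx_{i+1}\in\mathcal{R}_i$. A trace is progressing if it is not eventually constant; a branch is progressing if it has a progressing trace. A proof is a pre-proof in which every branch is either finite or progressing. For a formula $A$, $\mathrm{labCS}^\infty\vdash A$ means there is a proof whose root is the sequent $\Rightarrow x:A$ (empty $\mathcal{R}$ and $\Gamma$) for some label $x$. *)

(* Defs.v *)
From Stdlib Require Import List Permutation Arith.
Import ListNotations.

Inductive form : Type :=
| Bot : form
| Var : nat -> form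
| Imp : form -> form -> form
| Box : form -> form
| Tri : form -> form.

(* Classical propositional evaluation: atoms, Box- and Tri-formulas are treated
   as propositional atoms.  A formula is an instance of a classical
   propositional tautology iff it evaluates to true under every such valuation. *)
Fixpoint peval (v : form -> bool) (A : form) : bool :=
  match A with
  | Bot => false
  | Var p => v (Var p)
  | Imp B C => implb (peval v B) (peval v C)
  | Box B => v (Box B)
  | Tri B => v (Tri B)
  end.

Definition taut (A : form) : Prop := forall v, peval v A = true.

Inductive CS : form -> Prop :=
| CS_taut A : taut A -> CS A
| CS_KB A B : CS (Imp (Box (Imp A B)) (Imp (Box A) (Box B)))
| CS_GLB A : CS (Imp (Box (Imp (Box A) A)) (Box A))
| CS_BT A : CS (Imp (Box A) (Tri (Box A)))
| CS_KT A B : CS (Imp (Tri (Imp A B)) (Imp (Tri A) (Tri B)))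
| CS_GLT A : CS (Imp (Tri (Imp (Tri A) A)) (Tri A))
| CS_TB A : CS (Imp (Tri A) (Box (Tri A)))
| CS_MP A B : CS (Imp A B) -> CS A -> CS B
| CS_NecB A : CS A -> CS (Box A)
| CS_NecT A : CS A -> CS (Tri A).

Definition label := nat.
Definition lform := (label * form)%type.
Inductive rkind : Type := KR | KS.
Definition ratom := (rkind * label * label)%type.

Record sequent : Type := mkSeq {
  rels : list ratom;
  ante : list lform;
  succ : list lform }.

Definition seq_perm (s t : sequent) : Prop :=
  Permutation (rels s) (rels t) /\ Permutation (ante s) (ante t) /\
  Permutation (succ s) (succ t).

Definition occurs (y : label) (s : sequent) : Prop :=
  (exists k a b, In (k, a, b) (rels s) /\ (y = a \/ y = b)) \/
  (exists A, In (y, A) (ante s)) \/ (exists A, In (y, A) (succ s)).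

Definition modal (k : rkind) (A : form) : form :=
  match k with KR => Box A | KS => Tri A end.

Inductive rule0 : sequent -> list sequent -> Prop :=
| r_id Rl G O x p :
    In (x, Var p) G -> In (x, Var p) O -> rule0 (mkSeq Rl G O) []
| r_bot Rl G O x :
    In (x, Bot) G -> rule0 (mkSeq Rl G O) []
| r_impR Rl G O O' x A B :
    Permutation O ((x, Imp A B) :: O') ->
    rule0 (mkSeq Rl G O) [mkSeq Rl ((x, A) :: G) ((x, B) :: O')]
| r_impL Rl G G' O x A B :
    Permutation G ((x, Imp A B) :: G') ->
    rule0 (mkSeq Rl G O) [mkSeq Rl G' ((x, A) :: O); mkSeq Rl ((x, B) :: G') O]
| r_modR (k : rkind) Rl G O O' x y A :
    Permutation O ((x, modal k A) :: O') ->
    ~ occurs y (mkSeq Rl G O) ->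
    rule0 (mkSeq Rl G O) [mkSeq ((k, x, y) :: Rl) G ((y, A) :: O')]
| r_modL (k : rkind) Rl G O x y A :
    In (k, x, y) Rl -> In (x, modal k A) G ->
    rule0 (mkSeq Rl G O) [mkSeq Rl ((y, A) :: G) O]
| r_trans (k1 k2 : rkind) Rl G O x y z :
    In (k1, x, y) Rl -> In (k2, y, z) Rl ->
    rule0 (mkSeq Rl G O) [mkSeq ((k2, x, z) :: Rl) G O].

Definition rule (c : sequent) (ps : list sequent) : Prop :=
  exists ps0, rule0 c ps0 /\ Forall2 seq_perm ps ps0.

CoInductive tree : Type := Node : sequent -> list tree -> tree.

Definition root (t : tree) : sequent := match t with Node s _ => s end.
Definition children (t : tree) : list tree := match t with Node _ ts => ts end.

CoInductive preproof : tree -> Prop :=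
| pp_node s ts :
    rule s (map root ts) -> (forall t, In t ts -> preproof t) ->
    preproof (Node s ts).

Definition branch (t : tree) (b : nat -> tree) : Prop :=
  b 0 = t /\ forall i, In (b (S i)) (children (b i)).

Definition trace (b : nat -> tree) (x : nat -> label) : Prop :=
  forall i, x (S i) = x i \/ exists k, In (k, x i, x (S i)) (rels (root (b i))).

Definition progressing (x : nat -> label) : Prop :=
  ~ (exists n, forall m, n <= m -> x m = x n).

Definition is_proof (t : tree) : Prop :=
  preproof t /\
  forall b, branch t b -> exists x, trace b x /\ progressing x.

Definition labCS_provable (A : form) : Prop :=
  exists t x, is_proof t /\ root t = mkSeq [] [] [(x, A)].

(* Main.v *)
Require Import Defs.
From Stdlib Require Import List Permutation Arith Lia Classical ClassicalEpsilon Bool Wellfounded.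
Import ListNotations.


Fixpoint eval {W : Type} (Rel : rkind -> W -> W -> Prop) (V : nat -> W -> Prop)
  (w : W) (A : form) : Prop :=
  match A with
  | Bot => False
  | Var p => V p w
  | Imp B C => eval Rel V w B -> eval Rel V w C
  | Box B => forall u, Rel KR w u -> eval Rel V u B
  | Tri B => forall u, Rel KS w u -> eval Rel V u B
  end.

Definition frame {W : Type} (Rel : rkind -> W -> W -> Prop) : Prop :=
  (forall k1 k2 x y z, Rel k1 x y -> Rel k2 y z -> Rel k2 x z) /\
  well_founded (fun a b => exists k, Rel k b a).

Definition valid (A : form) : Prop :=
  forall (W : Type) (Rel : rkind -> W -> W -> Prop) (V : nat -> W -> Prop),
    frame Rel -> forall w, eval Rel V w A.

Lemma eval_modal {W} Rel V (w : W) k A :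
  eval Rel V w (modal k A) <-> forall u, Rel k w u -> eval Rel V u A.
Proof. destruct k; simpl; tauto. Qed.

Lemma peval_eval {W} Rel V (w : W) A :
  peval (fun B => if excluded_middle_informative (eval Rel V w B) then true else false) A = true
  <-> eval Rel V w A.
Proof.
  induction A; simpl.
  - intuition congruence.
  - destruct excluded_middle_informative; simpl; intuition congruence.
  - split; intro H.
    + intro HA. apply IHA2. apply IHA1 in HA. rewrite HA in H. exact H.
    + destruct (peval _ A1) eqn:E1; simpl; auto.
      apply IHA2, H, IHA1; reflexivity.
  - destruct excluded_middle_informative; simpl; intuition congruence.
  - destruct excluded_middle_informative; simpl; intuition congruence.
Qed.

Lemma lob_sem {W} (Rel : rkind -> W -> W -> Prop) V k A :
  frame Rel -> forall w,
  (forall u, Rel k w u -> (forall v, Rel k u v -> eval Rel V v A) -> eval Rel V u A) ->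
  forall u, Rel k w u -> eval Rel V u A.
Proof.
  intros [Htr Hwf] w H u.
  induction (Hwf u) as [u _ IH]. intros Hwu.
  apply H; auto. intros v Huv. apply IH. exists k; auto. eapply Htr; eauto.
Qed.

Lemma CS_valid A : CS A -> valid A.
Proof.
  intros HA W Rel V Hf. induction HA; intro w; simpl in *.
  - apply peval_eval. apply H.
  - intros H1 H2 u Hu. apply H1; auto.
  - intros H u Hu. eapply lob_sem with (k := KR); eauto.
  - intros H u Hu v Hv. apply H. destruct Hf as [Htr _]. eapply Htr; eauto.
  - intros H1 H2 u Hu. apply H1; auto.
  - intros H u Hu. eapply lob_sem with (k := KS); eauto.
  - intros H u Hu v Hv. apply H. destruct Hf as [Htr _]. eapply Htr; eauto.
  - apply IHHA1, IHHA2.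
  - intros; apply IHHA.
  - intros; apply IHHA.
Qed.


Definition form_eq_dec : forall A B : form, {A = B} + {A <> B}.
Proof. decide equality; apply Nat.eq_dec. Defined.

Definition Neg A := Imp A Bot.
Definition imps (l : list form) (A : form) : form := fold_right Imp A l.

Lemma peval_imps v l A :
  peval v (imps l A) = true <-> ((forall B, In B l -> peval v B = true) -> peval v A = true).
Proof.
  induction l; simpl.
  - split; [intros H _; exact H | intros H; apply H; tauto].
  - destruct (peval v a) eqn:E; simpl.
    + rewrite IHl. split.
      * intros H1 H2. apply H1. intros; apply H2; auto.
      * intros H1 H2. apply H1. intros B [<-|HB]; auto.
    + split; auto. intros _ H. exfalso. rewrite (H a (or_introl eq_refl)) in E. discriminate.
Qed.

Lemma CS_t Z : (forall v, peval v Z = true) -> CS Z.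
Proof. intros H. apply CS_taut. exact H. Qed.

Lemma CS_t1 X Y : CS X -> (forall v, peval v X = true -> peval v Y = true) -> CS Y.
Proof.
  intros HX H. apply (CS_MP X Y); auto. apply CS_t. intro v. simpl.
  destruct (peval v X) eqn:E; simpl; auto.
Qed.

Lemma CS_t2 X Y Z : CS X -> CS Y ->
  (forall v, peval v X = true -> peval v Y = true -> peval v Z = true) -> CS Z.
Proof.
  intros HX HY H. apply (CS_MP Y Z); auto. apply (CS_t1 X); auto. intros v HXv. simpl.
  destruct (peval v Y) eqn:E; simpl; auto.
Qed.

Ltac bsolve :=
  intros;
  repeat match goal with H : _ = true |- _ => revert H end;
  simpl;
  repeat match goal with
         | |- context [peval ?v ?A] => destruct (peval v A)
         | |- context [?v ?A] => lazymatch type of v with form -> bool => destruct (v A) end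
         end;
  simpl; auto; try discriminate.

Lemma CS_K k A B : CS (Imp (modal k (Imp A B)) (Imp (modal k A) (modal k B))).
Proof. destruct k; [apply CS_KB | apply CS_KT]. Qed.
Lemma CS_Nec k A : CS A -> CS (modal k A).
Proof. destruct k; [apply CS_NecB | apply CS_NecT]; auto. Qed.
Lemma CS_Lob k A : CS (Imp (modal k (Imp (modal k A) A)) (modal k A)).
Proof. destruct k; [apply CS_GLB | apply CS_GLT]. Qed.

Lemma CS_mono k A B : CS (Imp A B) -> CS (Imp (modal k A) (modal k B)).
Proof. intros H. apply (CS_MP (modal k (Imp A B))). apply CS_K. apply CS_Nec; auto. Qed.

Lemma CS_trans A B C : CS (Imp A B) -> CS (Imp B C) -> CS (Imp A C).
Proof. intros H1 H2. apply (CS_t2 _ _ _ H1 H2). bsolve. Qed.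

Definition And A B := Neg (Imp A (Neg B)).

Lemma CS_four k C : CS (Imp (modal k C) (modal k (modal k C))).
Proof.
  set (D := And C (modal k C)).
  assert (S1 : CS (Imp (modal k D) (modal k C))) by (apply CS_mono; apply CS_t; unfold D, And, Neg; bsolve).
  assert (S2 : CS (Imp C (Imp (modal k D) D))).
  { apply (CS_t1 _ _ S1). unfold D, And, Neg. bsolve. }
  assert (S3 : CS (Imp (modal k C) (modal k (Imp (modal k D) D)))) by (apply CS_mono; auto).
  assert (S4 := CS_Lob k D).
  assert (S5 : CS (Imp (modal k D) (modal k (modal k C)))) by (apply CS_mono; apply CS_t; unfold D, And, Neg; bsolve).
  eapply CS_trans; [eapply CS_trans; [exact S3 | exact S4] | exact S5].
Qed.

Lemma K_gen k l D : CS (Imp (modal k (imps l D)) (imps (map (modal k) l) (modal k D))).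
Proof.
  induction l as [|C l IH]; simpl.
  - apply CS_t; bsolve.
  - apply (CS_t2 _ _ _ (CS_K k C (imps l D)) IH). bsolve.
Qed.

Lemma K_rule k l D : CS (imps l D) -> CS (imps (map (modal k) l) (modal k D)).
Proof. intros H. eapply CS_MP; [apply K_gen | apply CS_Nec; auto]. Qed.

Definition der (G : list form) (A : form) : Prop := CS (imps G A).

Lemma der_weak G D A : incl G D -> der G A -> der D A.
Proof.
  intros Hi H. apply (CS_t1 _ _ H). intros v H1. apply peval_imps. intros H2.
  apply (proj1 (peval_imps v G _) H1). intros; apply H2; auto.
Qed.

Lemma der_in G A : In A G -> der G A.
Proof. intros H. apply CS_t. intro v. apply peval_imps. auto. Qed.

Lemma der_mp G A B : der G (Imp A B) -> der G A -> der G B.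
Proof.
  intros H1 H2. apply (CS_t2 _ _ _ H1 H2). intros v E1 E2.
  apply peval_imps. intros H. pose proof (proj1 (peval_imps v G _) E1 H) as E1'.
  pose proof (proj1 (peval_imps v G _) E2 H) as E2'. simpl in E1'. rewrite E2' in E1'. exact E1'.
Qed.

Lemma der_thm G A : CS A -> der G A.
Proof. intros H. apply (CS_t1 _ _ H). intros v E. apply peval_imps. auto. Qed.

Lemma der_cut G D A : (forall B, In B D -> der G B) -> CS (imps D A) -> der G A.
Proof.
  intros HD H. assert (H' : der G (imps D A)) by (apply der_thm; auto).
  clear H. induction D as [|B D IH]; simpl in *; auto.
  apply IH; [intros; apply HD; auto|]. eapply der_mp; [exact H'|]. apply HD; auto.
Qed.

Lemma der_imp_thm G A B : der G A -> CS (Imp A B) -> der G B.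
Proof. intros H1 H2. eapply der_mp; [apply der_thm; exact H2|exact H1]. Qed.


Fixpoint sub (A : form) : list form :=
  A :: match A with
       | Bot | Var _ => []
       | Imp B C => sub B ++ sub C
       | Box B | Tri B => sub B
       end.

Lemma sub_refl A : In A (sub A).
Proof. destruct A; simpl; auto. Qed.

Lemma sub_trans A B : In B (sub A) -> incl (sub B) (sub A).
Proof.
  induction A; simpl; intros H; destruct H as [<-|H]; try (apply incl_refl); simpl in *;
   try contradiction.
  - apply in_app_or in H. destruct H as [H|H]; intros x Hx; right; apply in_or_app;
     [left; apply (IHA1 H); auto | right; apply (IHA2 H); auto].
  - intros x Hx; right; apply (IHA H); auto.
  - intros x Hx; right; apply (IHA H); auto.
Qed.

Lemma sub_imp A B C : In (Imp B C) (sub A) -> In B (sub A) /\ In C (sub A).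
Proof.
  intros H. pose proof (sub_trans _ _ H) as Hi. split; apply Hi; simpl; right; apply in_or_app;
   [left|right]; apply sub_refl.
Qed.

Lemma sub_modal A k B : In (modal k B) (sub A) -> In B (sub A).
Proof.
  intros H. pose proof (sub_trans _ _ H) as Hi. apply Hi. destruct k; simpl; right; apply sub_refl.
Qed.

Definition inb (A : form) (w : list form) : bool :=
  if in_dec form_eq_dec A w then true else false.

Definition lits (cl w : list form) : list form :=
  map (fun A => if in_dec form_eq_dec A w then A else Neg A) cl.

Definition cons_ (G : list form) := ~ der G Bot.

Definition isW (cl w : list form) : Prop := incl w cl /\ cons_ (lits cl w).

Lemma lits_pos cl w A : In A cl -> In A w -> In A (lits cl w).
Proof. intros H1 H2. apply in_map_iff. exists A. destruct in_dec; tauto. Qed.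
Lemma lits_neg cl w A : In A cl -> ~ In A w -> In (Neg A) (lits cl w).
Proof. intros H1 H2. apply in_map_iff. exists A. destruct in_dec; tauto. Qed.

Lemma der_bot_neg G A : der G A -> der G (Neg A) -> der G Bot.
Proof. intros H1 H2. eapply der_mp; eauto. Qed.

Lemma M3 cl w A : isW cl w -> In A cl -> der (lits cl w) A -> In A w.
Proof.
  intros [_ Hc] HA H. destruct (in_dec form_eq_dec A w) as [|N]; auto. exfalso. apply Hc.
  eapply der_bot_neg; [exact H|]. apply der_in. apply lits_neg; auto.
Qed.

Lemma M1 cl w A : In A cl -> In A w -> der (lits cl w) A.
Proof. intros. apply der_in, lits_pos; auto. Qed.

Lemma M2 cl w A : In A cl -> ~ In A w -> der (lits cl w) (Neg A).
Proof. intros. apply der_in, lits_neg; auto. Qed.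

Fixpoint ext (G : list form) (l : list form) : list form :=
  match l with
  | [] => []
  | A :: l' => if excluded_middle_informative (der (A :: G) Bot)
               then ext (Neg A :: G) l' else A :: ext (A :: G) l'
  end.

Lemma cons_split G A : cons_ G -> der (A :: G) Bot -> cons_ (Neg A :: G).
Proof.
  intros Hc H1 H2. apply Hc. apply (CS_t2 _ _ _ H1 H2). unfold Neg. simpl. intros v.
  destruct (peval v A), (peval v (imps G Bot)); simpl; auto.
Qed.

Lemma ext_spec l : forall G, cons_ G -> exists Gf, incl G Gf /\ cons_ Gf /\
  incl (ext G l) l /\ (forall A, In A (ext G l) -> In A Gf) /\
  (forall A, In A l -> ~ In A (ext G l) -> In (Neg A) Gf).
Proof.
  induction l as [|A l IH]; intros G Hc; simpl.
  - exists G. repeat split; auto; try (intros ? []); apply incl_refl.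
  - destruct excluded_middle_informative as [D|D].
    + destruct (IH (Neg A :: G) (cons_split G A Hc D)) as [Gf [H1 [H2 [H3 [H4 H5]]]]].
      exists Gf. repeat split; auto.
      * intros x Hx; apply H1; right; auto.
      * intros x Hx; right; auto.
      * intros B [<-|HB] HN; [apply H1; left; auto | auto].
    + destruct (IH (A :: G) D) as [Gf [H1 [H2 [H3 [H4 H5]]]]].
      exists Gf. repeat split; auto.
      * intros x Hx; apply H1; right; auto.
      * intros x [<-|Hx]; [left; auto| right; auto].
      * intros B [<-|HB]; [apply H1; left; auto | auto].
      * intros B [<-|HB] HN; [exfalso; apply HN; left; auto | apply H5; auto].
        intro; apply HN; right; auto.
Qed.

Lemma lindenbaum cl G : cons_ G -> exists w, isW cl w /\ cons_ (G ++ lits cl w).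
Proof.
  intros Hc. destruct (ext_spec cl G Hc) as [Gf [H1 [H2 [H3 [H4 H5]]]]].
  exists (ext G cl). assert (Hinc : incl (G ++ lits cl (ext G cl)) Gf).
  { intros x Hx. apply in_app_or in Hx. destruct Hx as [Hx|Hx]; auto.
    apply in_map_iff in Hx. destruct Hx as [B [<- HB]]. destruct in_dec; auto. }
  split; [split; auto|].
  - intro H; apply H2. eapply der_weak; [|exact H]. intros x Hx. apply Hinc, in_or_app; auto.
  - intro H; apply H2. eapply der_weak; [exact Hinc|exact H].
Qed.

Lemma lind_pos cl G w A : cons_ (G ++ lits cl w) -> In A G -> In A cl -> In A w.
Proof.
  intros Hc HG Hcl. destruct (in_dec form_eq_dec A w) as [|N]; auto. exfalso. apply Hc.
  apply (der_bot_neg _ A); apply der_in; apply in_or_app; [left; auto | right; apply lits_neg; auto].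
Qed.

Lemma lind_neg cl G w A : cons_ (G ++ lits cl w) -> In (Neg A) G -> In A cl -> ~ In A w.
Proof.
  intros Hc HG Hcl HA. apply Hc.
  apply (der_bot_neg _ A); apply der_in; apply in_or_app; [right; apply lits_pos; auto | left; auto].
Qed.

Definition ismodal (D : form) : Prop := exists k C, D = modal k C.

Definition Rk (k : rkind) (w v : list form) : Prop :=
  (forall C, In (modal k C) w -> In C v) /\
  (forall k' C, In (modal k' C) w -> In (modal k' C) v) /\
  (exists D, In D v /\ ~ In D w /\ ismodal D).

Lemma Rk_trans k1 k2 x y z : Rk k1 x y -> Rk k2 y z -> Rk k2 x z.
Proof.
  intros [A1 [B1 [D [C1 [C2 [k [E ->]]]]]]] [A2 [B2 C3]]. split; [|split].
  - intros C H. apply A2, B1, H.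
  - intros k' C H. apply B2, B1, H.
  - exists (modal k E). repeat split; auto. exists k, E; auto.
Qed.

Definition ismodalb (D : form) : bool :=
  match D with Box _ | Tri _ => true | _ => false end.

Lemma ismodalb_spec D : ismodalb D = true <-> ismodal D.
Proof.
  split.
  - destruct D; simpl; try discriminate; intros _; [exists KR | exists KS]; eexists; reflexivity.
  - intros [k [C ->]]. destruct k; reflexivity.
Qed.

Definition mu (cl w : list form) : nat :=
  length (filter (fun D => ismodalb D && negb (inb D w)) cl).

Lemma filter_lt {T} (p q : T -> bool) l :
  (forall x, In x l -> q x = true -> p x = true) ->
  (exists x, In x l /\ p x = true /\ q x = false) ->
  length (filter q l) < length (filter p l).
Proof.
  induction l as [|a l IH]; simpl; intros H1 [x [Hx [Hp Hq]]]; [contradiction|].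
  assert (Hle : forall l', (forall x, In x l' -> q x = true -> p x = true) ->
            length (filter q l') <= length (filter p l')).
  { induction l' as [|b l' IH']; simpl; auto. intros H.
    destruct (q b) eqn:E; [rewrite (H b (or_introl eq_refl) E)|destruct (p b)]; simpl;
    [apply le_n_S|apply le_S|]; apply IH'; intros; apply H; auto. }
  destruct Hx as [<-|Hx].
  - rewrite Hp, Hq. simpl. apply le_n_S. apply Hle. intros; apply H1; auto.
  - destruct (q a) eqn:E.
    + rewrite (H1 a (or_introl eq_refl) E). simpl. apply le_n_S, IH; eauto.
    + destruct (p a); simpl; [apply le_S|]; apply IH; eauto.
Qed.

Lemma inb_spec A w : inb A w = true <-> In A w.
Proof. unfold inb. destruct in_dec; split; auto; discriminate. Qed.

Lemma Rk_mu cl k w v : incl v cl -> Rk k w v -> mu cl v < mu cl w.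
Proof.
  intros Hv [_ [B [D [H1 [H2 H3]]]]]. unfold mu. apply filter_lt.
  - intros x _ Hq. apply andb_true_iff in Hq. destruct Hq as [Hm Hn].
    apply andb_true_iff. split; auto. apply negb_true_iff. apply negb_true_iff in Hn.
    destruct (inb x w) eqn:E; auto. apply inb_spec in E.
    apply ismodalb_spec in Hm. destruct Hm as [k' [C ->]].
    apply B in E. apply inb_spec in E. congruence.
  - exists D. split; auto. apply ismodalb_spec in H3. split.
    + rewrite H3. simpl. destruct (inb D w) eqn:E; auto. apply inb_spec in E. contradiction.
    + rewrite H3. simpl. destruct (inb D v) eqn:E; auto. apply inb_spec in H1. congruence.
Qed.


Definition delta (k : rkind) (A : form) : list form :=
  match A with
  | Box D => match k with KR => [D; Box D] | KS => [Box D] end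
  | Tri D => match k with KS => [D; Tri D] | KR => [Tri D] end
  | _ => []
  end.

Lemma delta_ax k A B : In B (delta k A) -> CS (Imp A (modal k B)).
Proof.
  destruct A; destruct k; simpl; intros H; try contradiction;
   repeat (destruct H as [<-|H]); try contradiction; simpl;
   first [apply CS_BT | apply CS_TB | apply (CS_four KR) | apply (CS_four KS) | apply CS_t; bsolve].
Qed.

Lemma delta_body k C w : In (modal k C) w -> In C (flat_map (delta k) w).
Proof. intros H. apply in_flat_map. exists (modal k C). split; auto. destruct k; simpl; auto. Qed.

Lemma delta_self k k' C w : In (modal k' C) w -> In (modal k' C) (flat_map (delta k) w).
Proof. intros H. apply in_flat_map. exists (modal k' C). split; auto. destruct k, k'; simpl; auto. Qed.

Definition closedcl (cl : list form) : Prop :=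
  (forall B C, In (Imp B C) cl -> In B cl /\ In C cl) /\
  (forall k B, In (modal k B) cl -> In B cl).

Lemma closedcl_sub A : closedcl (sub A).
Proof. split; [apply sub_imp | apply sub_modal]. Qed.

Lemma existence cl k C w : closedcl cl ->
  isW cl w -> In (modal k C) cl -> ~ In (modal k C) w ->
  exists v, isW cl v /\ Rk k w v /\ ~ In C v.
Proof.
  intros Hclo Hw Hcl Hn.
  set (Dl := flat_map (delta k) w).
  assert (Hc : cons_ (Neg C :: modal k C :: Dl)).
  { intro Hd. apply Hn.
    assert (Sa : CS (imps Dl (Imp (modal k C) C))).
    { apply (CS_t1 _ _ Hd). intros v E. apply peval_imps. intros HD.
      simpl in E. destruct (peval v C) eqn:EC; simpl; [destruct (peval v (modal k C)); auto|].
      destruct (peval v (modal k C)) eqn:EM; simpl in *; auto.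
      pose proof (proj1 (peval_imps v Dl Bot) E HD) as F. discriminate F. }
    assert (Sb := K_rule k _ _ Sa).
    assert (Sc : CS (imps (map (modal k) Dl) (modal k C))).
    { apply (CS_t2 _ _ _ Sb (CS_Lob k C)). intros v E1 E2. apply peval_imps. intros HD.
      pose proof (proj1 (peval_imps v _ _) E1 HD) as E1'. simpl in E2. rewrite E1' in E2. exact E2. }
    apply (M3 cl w); auto.
    apply (der_cut (lits cl w) _ _) in Sc; [exact Sc|].
    intros B HB. apply in_map_iff in HB. destruct HB as [psi [<- Hpsi]].
    apply in_flat_map in Hpsi. destruct Hpsi as [phi [Hphi Hpsi]].
    eapply der_imp_thm; [apply M1; [apply Hw|]; exact Hphi | apply delta_ax; auto]. }
  destruct (lindenbaum cl _ Hc) as [v [Hv Hcv]].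
  assert (HCcl : In C cl) by (eapply (proj2 Hclo); eauto).
  exists v. split; [exact Hv|split; [split; [|split]|]].
  - intros D HD. eapply lind_pos; [exact Hcv| |].
    + right; right. apply delta_body; auto.
    + eapply (proj2 Hclo). apply (proj1 Hw). exact HD.
  - intros k' D HD. eapply lind_pos; [exact Hcv| |].
    + right; right. apply delta_self; auto.
    + apply (proj1 Hw). exact HD.
  - exists (modal k C). split; [|split; auto].
    + eapply lind_pos; [exact Hcv| |auto]. right; left; auto.
    + exists k, C; auto.
  - eapply lind_neg; [exact Hcv| left; reflexivity | auto].
Qed.

Definition CW (cl : list form) := {w : list form | isW cl w}.
Definition CRel (cl : list form) (k : rkind) (w v : CW cl) : Prop := Rk k (proj1_sig w) (proj1_sig v).
Definition CV (cl : list form) (p : nat) (w : CW cl) : Prop := In (Var p) (proj1_sig w).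

Lemma C_frame cl : frame (CRel cl).
Proof.
  split.
  - intros k1 k2 x y z. unfold CRel. apply Rk_trans.
  - apply (wf_incl _ _ (fun a b => mu cl (proj1_sig a) < mu cl (proj1_sig b))).
    + intros a b [k H]. unfold CRel in H. apply (Rk_mu cl k); auto. apply (proj2_sig a).
    + apply wf_inverse_image. apply lt_wf.
Qed.

Lemma truth cl : closedcl cl -> forall A, In A cl -> forall w : CW cl,
  eval (CRel cl) (CV cl) w A <-> In A (proj1_sig w).
Proof.
  intros Hclo A. induction A; intros HA [w Hw]; simpl.
  - split; [tauto|]. intros H. exfalso. apply (proj2 Hw). apply M1; auto.
  - unfold CV; simpl; tauto.
  - destruct (proj1 Hclo _ _ HA) as [H1 H2].
    rewrite (IHA1 H1 (exist _ w Hw)), (IHA2 H2 (exist _ w Hw)). simpl. split.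
    + intros H. destruct (in_dec form_eq_dec A1 w) as [Y|N].
      * apply (M3 cl w); auto. apply (der_imp_thm _ (A2)). apply M1; auto. apply CS_t; bsolve.
      * apply (M3 cl w); auto. apply (der_imp_thm _ (Neg A1)). apply M2; auto. apply CS_t; unfold Neg; bsolve.
    + intros H Y. apply (M3 cl w); auto. eapply der_mp; apply M1; eauto.
  - assert (HB : In A cl) by (apply ((proj2 Hclo) KR); auto).
    split.
    + intros H. apply NNPP. intro N.
      destruct (existence cl KR A w Hclo Hw HA N) as [v [Hv [HR HnA]]].
      apply HnA. apply (IHA HB (exist _ v Hv)). apply H. exact HR.
    + intros H [v Hv] HR. apply (IHA HB). apply (proj1 HR). exact H.
  - assert (HB : In A cl) by (apply ((proj2 Hclo) KS); auto).
    split.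
    + intros H. apply NNPP. intro N.
      destruct (existence cl KS A w Hclo Hw HA N) as [v [Hv [HR HnA]]].
      apply HnA. apply (IHA HB (exist _ v Hv)). apply H. exact HR.
    + intros H [v Hv] HR. apply (IHA HB). apply (proj1 HR). exact H.
Qed.

Lemma valid_CS A : valid A -> CS A.
Proof.
  intros HV. apply NNPP. intro HN.
  assert (Hc : cons_ [Neg A]).
  { intro H. apply HN. apply (CS_t1 _ _ H). unfold Neg; simpl; bsolve. }
  destruct (lindenbaum (sub A) _ Hc) as [w [Hw Hcw]].
  assert (HnA : ~ In A w) by (eapply lind_neg; [exact Hcw|left; reflexivity|apply sub_refl]).
  apply HnA.
  pose proof (HV (CW (sub A)) (CRel (sub A)) (CV (sub A)) (C_frame _) (exist _ w Hw)) as HE.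
  apply (truth (sub A) (closedcl_sub A) A (sub_refl A) (exist _ w Hw)) in HE. exact HE.
Qed.


Definition falsified {W} (Rel : rkind -> W -> W -> Prop) V (f : label -> W) (s : sequent) : Prop :=
  (forall k a b, In (k,a,b) (rels s) -> Rel k (f a) (f b)) /\
  (forall x F, In (x,F) (ante s) -> eval Rel V (f x) F) /\
  (forall x F, In (x,F) (succ s) -> ~ eval Rel V (f x) F).

Definition occR (z : label) (s : sequent) : Prop :=
  exists k a b, In (k,a,b) (rels s) /\ (z = a \/ z = b).

Lemma falsified_perm {W} Rel V (f : label -> W) s t :
  seq_perm s t -> falsified Rel V f s -> falsified Rel V f t.
Proof.
  intros [H1 [H2 H3]] [F1 [F2 F3]]. repeat split.
  - intros k a b H. apply F1. eapply Permutation_in; [symmetry; eauto | eauto].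
  - intros x F H. apply F2. eapply Permutation_in; [symmetry; eauto | eauto].
  - intros x F H. apply F3. eapply Permutation_in; [symmetry; eauto | eauto].
Qed.

Definition upd {W} (f : label -> W) (y : label) (u : W) : label -> W :=
  fun z => if Nat.eq_dec z y then u else f z.

Lemma rule0_sound {W} (Rel : rkind -> W -> W -> Prop) V f s ps :
  frame Rel -> rule0 s ps -> falsified Rel V f s ->
  exists p f', In p ps /\ falsified Rel V f' p /\ (forall z, occR z s -> f' z = f z)
     /\ incl (rels s) (rels p).
Proof.
  intros Hfr Hr [F1 [F2 F3]]. destruct Hr; simpl in *.
  - exfalso. apply (F3 _ _ H0). apply F2; auto.
  - exfalso. apply (F2 _ _ H).
  - assert (HI : In (x, Imp A B) O) by (eapply Permutation_in; [symmetry; eauto | left; auto]).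
    pose proof (F3 _ _ HI) as F3'. simpl in F3'.
    exists (mkSeq Rl ((x,A)::G) ((x,B)::O')), f. repeat split; simpl; auto.
    + intros y F [E|E]; [inversion E; subst|]; auto.
      destruct (classic (eval Rel V (f y) F)); auto. tauto.
    + intros y F [E|E]; [inversion E; subst|].
      * intro. apply F3'. auto.
      * apply F3. eapply Permutation_in; [symmetry; eauto | right; auto].
    + apply incl_refl.
  - assert (HI : In (x, Imp A B) G) by (eapply Permutation_in; [symmetry; eauto | left; auto]).
    pose proof (F2 _ _ HI) as HE. simpl in HE.
    assert (HG' : forall y F, In (y,F) G' -> eval Rel V (f y) F).
    { intros y F Hy. apply F2. eapply Permutation_in; [symmetry; eauto | right; auto]. }
    destruct (classic (eval Rel V (f x) A)) as [HA|HA].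
    + exists (mkSeq Rl ((x,B)::G') O), f. repeat split; simpl; auto.
      * intros y F [E|E]; [inversion E; subst|]; auto.
      * apply incl_refl.
    + exists (mkSeq Rl G' ((x,A)::O)), f. repeat split; simpl; auto.
      * intros y F [E|E]; [inversion E; subst|]; auto.
      * apply incl_refl.
  - assert (HI : In (x, modal k A) O) by (eapply Permutation_in; [symmetry; eauto | left; auto]).
    pose proof (F3 _ _ HI) as HE. rewrite eval_modal in HE.
    apply not_all_ex_not in HE. destruct HE as [u Hu].
    assert (Hu1 : Rel k (f x) u) by (destruct (classic (Rel k (f x) u)); tauto).
    assert (Hu2 : ~ eval Rel V u A) by tauto.
    assert (Hxy : x <> y). { intro E; subst. apply H0. right; right. exists (modal k A); auto. }
    assert (Hag : forall z, occurs z (mkSeq Rl G O) -> upd f y u z = f z).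
    { intros z Hz. unfold upd. destruct Nat.eq_dec; auto. subst. contradiction. }
    exists (mkSeq ((k,x,y)::Rl) G ((y,A)::O')), (upd f y u). repeat split; simpl.
    + left; reflexivity.
    + intros k' a b [E|E].
      * inversion E; subst. rewrite Hag. unfold upd. destruct Nat.eq_dec; [|congruence]. auto.
        right; right. eexists; exact HI.
      * rewrite !Hag; [apply F1; auto| |]; left; exists k', a, b; auto.
    + intros z F Hz. rewrite Hag; [apply F2; auto|]. right; left; eauto.
    + intros z F [E|E].
      * inversion E; subst. unfold upd. destruct Nat.eq_dec; [|congruence]. auto.
      * assert (In (z,F) O) by (eapply Permutation_in; [symmetry; eauto | right; auto]).
        rewrite Hag; [apply F3; auto|]. right; right; eauto.
    + intros z Hz. apply Hag. left. exact Hz.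
    + intros a Ha; right; auto.
  - exists (mkSeq Rl ((y,A)::G) O), f. repeat split; simpl; auto.
    + intros z F [E|E]; [inversion E; subst|]; auto.
      pose proof (F2 _ _ H0) as HE. rewrite eval_modal in HE. apply HE. apply F1; auto.
    + apply incl_refl.
  - exists (mkSeq ((k2,x,z)::Rl) G O), f. repeat split; simpl; auto.
    + intros k a b [E|E]; [inversion E; subst|]; auto.
      destruct Hfr as [Htr _]. eapply Htr; eauto.
    + intros a Ha; right; auto.
Qed.

Lemma Forall2_in_r {A B} (P : A -> B -> Prop) l1 l2 b :
  Forall2 P l1 l2 -> In b l2 -> exists a, In a l1 /\ P a b.
Proof.
  induction 1; simpl; [tauto|]. intros [E|E]; subst; eauto.
  destruct (IHForall2 E) as [a' [? ?]]; eauto.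
Qed.

Lemma seq_perm_incl_rels s t : seq_perm s t -> incl (rels s) (rels t).
Proof. intros [H _] a Ha. eapply Permutation_in; eauto. Qed.

Lemma seq_perm_sym s t : seq_perm s t -> seq_perm t s.
Proof. intros [? [? ?]]; repeat split; symmetry; auto. Qed.

Lemma preproof_step {W} (Rel : rkind -> W -> W -> Prop) V f t :
  frame Rel -> preproof t -> falsified Rel V f (root t) ->
  exists t' f', In t' (children t) /\ preproof t' /\ falsified Rel V f' (root t') /\
    (forall z, occR z (root t) -> f' z = f z) /\ incl (rels (root t)) (rels (root t')).
Proof.
  intros Hfr Hp Hf. destruct Hp as [s ts [ps0 [Hr HF]] Hch]. simpl in *.
  destruct (rule0_sound Rel V f _ _ Hfr Hr Hf) as [p [f' [Hp [Hf' [Hag Hinc]]]]].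
  destruct (Forall2_in_r _ _ _ _ HF Hp) as [a [Ha Hsp]].
  apply in_map_iff in Ha. destruct Ha as [t' [E Ht']]. subst a.
  exists t', f'. split; [auto|split; [auto|split; [|split]]].
  - eapply falsified_perm; [apply seq_perm_sym; eauto | auto].
  - exact Hag.
  - intros z Hz. apply seq_perm_sym in Hsp. apply seq_perm_incl_rels in Hsp. auto.
Qed.


Definition occL (z : label) (rl : list ratom) : Prop :=
  exists k a b, In (k,a,b) rl /\ (z = a \/ z = b).

Lemma first_change_aux (x : nat -> label) i d :
  (forall m, i <= m <= i + d -> x m = x i) \/
  exists j, i <= j < i + d /\ x (S j) <> x j /\ forall m, i <= m <= j -> x m = x i.
Proof.
  induction d.
  - left. intros m Hm. replace m with i by lia. auto.
  - destruct IHd as [H|[j [? [? ?]]]].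
    + destruct (Nat.eq_dec (x (S (i + d))) (x i)) as [E|E].
      * left. intros m Hm. destruct (Nat.eq_dec m (S (i + d))); subst; auto. apply H; lia.
      * right. exists (i + d). split; [lia|]. split.
        -- rewrite (H (i+d)); [auto|lia].
        -- intros; apply H; lia.
    + right. exists j. split; [lia|]. auto.
Qed.

Lemma first_change (x : nat -> label) i m :
  i <= m -> x m <> x i ->
  exists j, i <= j /\ x (S j) <> x j /\ forall m, i <= m <= j -> x m = x i.
Proof.
  intros Hm Hx. destruct (first_change_aux x i (m - i)) as [H|[j [? [? ?]]]].
  - exfalso. apply Hx. apply H. lia.
  - exists j. split; [lia|]. auto.
Qed.

Lemma stab {W} (rl : nat -> list ratom) (g : nat -> label -> W) :
  (forall i z, occL z (rl i) -> g (S i) z = g i z) ->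
  (forall i z, occL z (rl i) -> occL z (rl (S i))) ->
  forall i z, occL z (rl i) -> forall d, occL z (rl (i+d)) /\ g (i+d) z = g i z.
Proof.
  intros H1 H2 i z Hz d. induction d.
  - rewrite Nat.add_0_r. auto.
  - destruct IHd as [A B]. replace (i + S d) with (S (i + d)) by lia.
    split; auto. rewrite H1; auto.
Qed.

Lemma chain_false {W} (Rel : rkind -> W -> W -> Prop) (rl : nat -> list ratom)
  (g : nat -> label -> W) (x : nat -> label) :
  (forall i k a b, In (k,a,b) (rl i) -> Rel k (g i a) (g i b)) ->
  (forall i z, occL z (rl i) -> g (S i) z = g i z) ->
  (forall i z, occL z (rl i) -> occL z (rl (S i))) ->
  (forall i, x (S i) = x i \/ exists k, In (k, x i, x (S i)) (rl i)) ->
  progressing x -> well_founded (fun a b => exists k, Rel k b a) -> False.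
Proof.
  intros HR Hg Ho Htr Hpr Hwf.
  assert (Hnext : forall i, exists j, i <= j /\ x (S j) <> x j /\
            forall m, i <= m <= j -> x m = x i).
  { intro i. destruct (classic (exists m, i <= m /\ x m <> x i)) as [[m [? ?]]|N].
    - eapply first_change; eauto.
    - exfalso. apply Hpr. exists i. intros m Hm.
      destruct (Nat.eq_dec (x m) (x i)); auto. exfalso; eauto. }
  assert (Hrel : forall j, x (S j) <> x j -> exists k, In (k, x j, x (S j)) (rl j)).
  { intros j H. destruct (Htr j); [congruence|auto]. }
  assert (Claim : forall w, Acc (fun a b => exists k, Rel k b a) w ->
            forall i, occL (x i) (rl i) -> g i (x i) = w -> False).
  { intros w Hacc. induction Hacc as [w _ IH]. intros i Hoc Hw.
    destruct (Hnext i) as [j [Hij [Hne Hc]]].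
    destruct (Hrel j Hne) as [k Hk].
    pose proof (stab rl g Hg Ho i (x i) Hoc (j - i)) as [S1 S2].
    replace (i + (j - i)) with j in * by lia.
    assert (Hxj : x j = x i) by (apply Hc; lia).
    assert (Hoc' : occL (x (S j)) (rl j)) by (exists k, (x j), (x (S j)); auto).
    apply (IH (g j (x (S j)))) with (i := S j).
    - exists k. rewrite <- Hw, <- S2, <- Hxj. apply HR; auto.
    - apply Ho; auto.
    - apply Hg; auto. }
  destruct (Hnext 0) as [j [_ [Hne _]]].
  destruct (Hrel j Hne) as [k Hk].
  apply (Claim (g (S j) (x (S j))) (Hwf _) (S j)); auto.
  apply Ho. exists k, (x j), (x (S j)); auto.
Qed.


Definition BSt {W} (Rel : rkind -> W -> W -> Prop) V :=
  {p : tree * (label -> W) | preproof (fst p) /\ falsified Rel V (snd p) (root (fst p))}.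

Lemma bst_next_ex {W} (Rel : rkind -> W -> W -> Prop) V (Hfr : frame Rel) (st : BSt Rel V) :
  exists st' : BSt Rel V,
    In (fst (proj1_sig st')) (children (fst (proj1_sig st))) /\
    (forall z, occR z (root (fst (proj1_sig st))) -> snd (proj1_sig st') z = snd (proj1_sig st) z) /\
    incl (rels (root (fst (proj1_sig st)))) (rels (root (fst (proj1_sig st')))).
Proof.
  destruct st as [[t f] [Hp Hf]]. simpl in *.
  destruct (preproof_step Rel V f t Hfr Hp Hf) as [t' [f' [H1 [H2 [H3 [H4 H5]]]]]].
  exists (exist _ (t', f') (conj H2 H3)). simpl. auto.
Qed.

Definition bst_next {W} (Rel : rkind -> W -> W -> Prop) V (Hfr : frame Rel) (st : BSt Rel V)
  : BSt Rel V := proj1_sig (constructive_indefinite_description _ (bst_next_ex Rel V Hfr st)).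

Fixpoint bst_iter {W} (Rel : rkind -> W -> W -> Prop) V (Hfr : frame Rel) (st0 : BSt Rel V)
  (n : nat) : BSt Rel V :=
  match n with 0 => st0 | S n => bst_next Rel V Hfr (bst_iter Rel V Hfr st0 n) end.

Lemma labCS_valid A : labCS_provable A -> valid A.
Proof.
  intros [t [x0 [[Hp Hbr] Hroot]]] W Rel V Hfr w.
  apply NNPP. intro HA.
  assert (Hf0 : falsified Rel V (fun _ => w) (root t)).
  { rewrite Hroot. repeat split; simpl; try tauto.
    intros x F [E|[]]. inversion E; subst. auto. }
  set (st0 := exist (fun p : tree * (label -> W) =>
                 preproof (fst p) /\ falsified Rel V (snd p) (root (fst p)))
                (t, fun _ => w) (conj Hp Hf0)).
  set (it := bst_iter Rel V Hfr st0).
  set (b := fun i => fst (proj1_sig (it i))).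
  set (g := fun i => snd (proj1_sig (it i))).
  assert (Hspec : forall i,
    In (b (S i)) (children (b i)) /\
    (forall z, occR z (root (b i)) -> g (S i) z = g i z) /\
    incl (rels (root (b i))) (rels (root (b (S i))))).
  { intro i. unfold b, g. change (it (S i)) with (bst_next Rel V Hfr (it i)).
    unfold bst_next.
    exact (proj2_sig (constructive_indefinite_description _ (bst_next_ex Rel V Hfr (it i)))). }
  destruct (Hbr b) as [x [Htr Hprog]].
  { split; [reflexivity|]. intro i. apply Hspec. }
  apply (chain_false Rel (fun i => rels (root (b i))) g x); auto.
  - intros i k a c H. unfold g, b in *. destruct (proj2_sig (it i)) as [_ [F1 _]]. apply F1; auto.
  - intros i z Hz. apply Hspec. exact Hz.
  - intros i z [k [a [c [H1 H2]]]]. exists k, a, c. split; auto. apply Hspec; auto.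
  - apply Hfr.
Qed.


Definition rkind_eq_dec : forall a b : rkind, {a = b} + {a <> b}.
Proof. decide equality. Defined.
Definition lform_eq_dec : forall a b : lform, {a = b} + {a <> b}.
Proof. decide equality; [apply form_eq_dec | apply Nat.eq_dec]. Defined.
Definition ratom_eq_dec : forall a b : ratom, {a = b} + {a <> b}.
Proof. decide equality; try apply Nat.eq_dec. decide equality; try apply Nat.eq_dec. apply rkind_eq_dec. Defined.

Fixpoint rm (a : lform) (l : list lform) : list lform :=
  match l with
  | [] => []
  | b :: l' => if lform_eq_dec a b then l' else b :: rm a l'
  end.

Lemma rm_perm a l : In a l -> Permutation l (a :: rm a l).
Proof.
  induction l as [|b l IH]; simpl; [tauto|]. intros H.
  destruct (lform_eq_dec a b) as [->|N]; auto.
  destruct H as [->|H]; [congruence|].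
  eapply perm_trans; [apply perm_skip, IH; auto| apply perm_swap].
Qed.

Lemma rm_in b a l : In b (rm a l) -> In b l.
Proof.
  induction l as [|c l IH]; simpl; auto. destruct lform_eq_dec; simpl; auto.
  intros [->|H]; auto.
Qed.

Lemma in_rm b a l : In b l -> b <> a -> In b (rm a l).
Proof.
  induction l as [|c l IH]; simpl; auto. intros [->|H] N; destruct lform_eq_dec; simpl; subst; auto.
  congruence.
Qed.

Definition maxl (l : list nat) : nat := fold_right Nat.max 0 l.
Lemma maxl_ge l a : In a l -> a <= maxl l.
Proof. induction l; simpl; [tauto|]. intros [->|H]; [lia|]. specialize (IHl H). lia. Qed.

Definition labels (s : sequent) : list label :=
  flat_map (fun r : ratom => let '(k, a, b) := r in [a; b]) (rels s) ++ map fst (ante s) ++ map fst (succ s).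

Definition fresh (s : sequent) : label := S (maxl (labels s)).

Lemma occurs_le y s : occurs y s -> y <= maxl (labels s).
Proof.
  intros H. apply maxl_ge. unfold labels. apply in_or_app.
  destruct H as [[k [a [b [H1 H2]]]]|[[A H]|[A H]]].
  - left. apply in_flat_map. exists (k,a,b). split; auto. simpl. destruct H2; subst; auto.
  - right. apply in_or_app. left. apply in_map_iff. exists (y,A); auto.
  - right. apply in_or_app. right. apply in_map_iff. exists (y,A); auto.
Qed.

Lemma fresh_not s : ~ occurs (fresh s) s.
Proof. intros H. apply occurs_le in H. unfold fresh in H. lia. Qed.

Inductive task : Type :=
| TImpL (x : label) (A B : form)
| TImpR (x : label) (A B : form)
| TModR (k : rkind) (x : label) (A : form)
| TModL (k : rkind) (x y : label) (A : form)
| TTrans (k1 k2 : rkind) (x y z : label).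

Definition apply_task (s : sequent) (t : task) : option (list sequent) :=
  let R := rels s in let G := ante s in let O := succ s in
  match t with
  | TImpL x A B =>
      if in_dec lform_eq_dec (x, Imp A B) G then
        Some [mkSeq R (rm (x, Imp A B) G) ((x,A) :: O); mkSeq R ((x,B) :: rm (x, Imp A B) G) O]
      else None
  | TImpR x A B =>
      if in_dec lform_eq_dec (x, Imp A B) O then
        Some [mkSeq R ((x,A) :: G) ((x,B) :: rm (x, Imp A B) O)]
      else None
  | TModR k x A =>
      if in_dec lform_eq_dec (x, modal k A) O then
        Some [mkSeq ((k, x, fresh s) :: R) G ((fresh s, A) :: rm (x, modal k A) O)]
      else None
  | TModL k x y A =>
      if in_dec ratom_eq_dec (k, x, y) R then
        if in_dec lform_eq_dec (x, modal k A) G then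
          Some [mkSeq R ((y, A) :: G) O]
        else None
      else None
  | TTrans k1 k2 x y z =>
      if in_dec ratom_eq_dec (k1, x, y) R then
        if in_dec ratom_eq_dec (k2, y, z) R then
          Some [mkSeq ((k2, x, z) :: R) G O]
        else None
      else None
  end.

Lemma apply_task_rule s t ps : apply_task s t = Some ps -> rule0 s ps.
Proof.
  destruct s as [R G O]. destruct t; simpl; intros H;
   repeat match goal with H : context [in_dec ?d ?a ?l] |- _ => destruct (in_dec d a l) end;
   try discriminate; inversion H; subst; clear H.
  - apply r_impL. apply rm_perm; auto.
  - apply r_impR. apply rm_perm; auto.
  - apply (r_modR k R G O _ x). apply rm_perm; auto. apply fresh_not.
  - eapply r_modL; eauto.
  - eapply r_trans; eauto.
Qed.

Lemma apply_task_len s t ps : apply_task s t = Some ps -> ps <> [] /\ length ps <= 2.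
Proof.
  destruct t; simpl; intros H;
   repeat match goal with H : context [in_dec ?d ?a ?l] |- _ => destruct (in_dec d a l) end;
   try discriminate; inversion H; subst; simpl; split; auto; congruence.
Qed.

Definition is_bot (a : lform) : bool := match snd a with Bot => true | _ => false end.
Definition is_id (O : list lform) (a : lform) : bool :=
  match snd a with Var p => if in_dec lform_eq_dec a O then true else false | _ => false end.
Definition closedb (s : sequent) : bool :=
  existsb is_bot (ante s) || existsb (is_id (succ s)) (ante s).

Lemma closedb_rule s : closedb s = true -> rule0 s [].
Proof.
  destruct s as [R G O]. unfold closedb; simpl. intros H. apply orb_true_iff in H.
  destruct H as [H|H]; apply existsb_exists in H; destruct H as [[x F] [H1 H2]];
   unfold is_bot, is_id in H2; simpl in H2; destruct F; try discriminate.
  - eapply r_bot; eauto.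
  - destruct in_dec; try discriminate. eapply r_id; eauto.
Qed.

Lemma closedb_false_bot s x : closedb s = false -> ~ In (x, Bot) (ante s).
Proof.
  unfold closedb. intros H Hin. apply orb_false_iff in H. destruct H as [H _].
  assert (existsb is_bot (ante s) = true) by (apply existsb_exists; exists (x,Bot); auto).
  congruence.
Qed.

Lemma closedb_false_id s x p : closedb s = false -> In (x, Var p) (ante s) -> ~ In (x, Var p) (succ s).
Proof.
  unfold closedb. intros H Hin Hs. apply orb_false_iff in H. destruct H as [_ H].
  assert (existsb (is_id (succ s)) (ante s) = true).
  { apply existsb_exists; exists (x,Var p); split; auto. unfold is_id; simpl. destruct in_dec; tauto. }
  congruence.
Qed.

Definition ante_tasks (a : lform) : list task :=
  match a with (x, Imp A B) => [TImpL x A B] | _ => [] end.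
Definition succ_tasks (a : lform) : list task :=
  match a with
  | (x, Imp A B) => [TImpR x A B]
  | (x, Box A) => [TModR KR x A]
  | (x, Tri A) => [TModR KS x A]
  | _ => [] end.
Definition modl_tasks (G : list lform) (r : ratom) : list task :=
  let '(k, x, y) := r in
  flat_map (fun a : lform => match snd a with Box A | Tri A => [TModL k x y A] | _ => [] end) G.
Definition trans_tasks (R : list ratom) (r : ratom) : list task :=
  let '(k1, x, y) := r in map (fun r' : ratom => let '(k2, _, z) := r' in TTrans k1 k2 x y z) R.

Definition alltasks (s : sequent) : list task :=
  flat_map ante_tasks (ante s) ++ flat_map succ_tasks (succ s) ++
  flat_map (modl_tasks (ante s)) (rels s) ++ flat_map (trans_tasks (rels s)) (rels s).

Lemma at_impL s x A B : In (x, Imp A B) (ante s) -> In (TImpL x A B) (alltasks s).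
Proof.
  intros H. unfold alltasks. apply in_or_app; left. apply in_flat_map. exists (x, Imp A B). simpl; auto.
Qed.
Lemma at_impR s x A B : In (x, Imp A B) (succ s) -> In (TImpR x A B) (alltasks s).
Proof.
  intros H. unfold alltasks. apply in_or_app; right; apply in_or_app; left.
  apply in_flat_map. exists (x, Imp A B). simpl; auto.
Qed.
Lemma at_modR s k x A : In (x, modal k A) (succ s) -> In (TModR k x A) (alltasks s).
Proof.
  intros H. unfold alltasks. apply in_or_app; right; apply in_or_app; left.
  apply in_flat_map. exists (x, modal k A). destruct k; simpl; auto.
Qed.
Lemma at_modL s k x y A : In (k, x, y) (rels s) -> In (x, modal k A) (ante s) ->
  In (TModL k x y A) (alltasks s).
Proof.
  intros H1 H2. unfold alltasks. apply in_or_app; right; apply in_or_app; right; apply in_or_app; left.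
  apply in_flat_map. exists (k, x, y). split; auto. simpl. apply in_flat_map.
  exists (x, modal k A). destruct k; simpl; auto.
Qed.
Lemma at_trans s k1 k2 x y z : In (k1, x, y) (rels s) -> In (k2, y, z) (rels s) ->
  In (TTrans k1 k2 x y z) (alltasks s).
Proof.
  intros H1 H2. unfold alltasks. apply in_or_app; right; apply in_or_app; right; apply in_or_app; right.
  apply in_flat_map. exists (k1, x, y). split; auto. simpl. apply in_map_iff.
  exists (k2, y, z). auto.
Qed.

Fixpoint pop (s : sequent) (q : list task) : option (list sequent * list task) :=
  match q with
  | [] => None
  | t :: q' => match apply_task s t with
               | Some ps => Some (ps, q')
               | None => pop s q'
               end
  end.

Lemma pop_some s q ps q' : pop s q = Some (ps, q') ->
  exists pre t, q = pre ++ t :: q' /\ (forall t', In t' pre -> apply_task s t' = None) /\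
    apply_task s t = Some ps.
Proof.
  induction q as [|t q IH]; simpl; [discriminate|]. destruct (apply_task s t) eqn:E.
  - intros H. inversion H; subst. exists [], t. simpl. repeat split; auto. tauto.
  - intros H. destruct (IH H) as [pre [t0 [-> [H1 H2]]]]. exists (t :: pre), t0.
    repeat split; auto. intros t' [<-|Ht']; auto.
Qed.

Lemma pop_none s q : pop s q = None -> forall t, In t q -> apply_task s t = None.
Proof.
  induction q as [|t q IH]; simpl; [tauto|]. destruct (apply_task s t) eqn:E; [discriminate|].
  intros H t' [<-|Ht']; auto.
Qed.

Definition state := (sequent * list task)%type.

Definition step (st : state) : option (list state) :=
  if closedb (fst st) then Some []
  else match pop (fst st) (snd st) with
       | None => None
       | Some (ps, q') => Some (map (fun s' => (s', q' ++ alltasks s')) ps)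
       end.

CoFixpoint tr (st : state) : tree :=
  Node (fst st) (match step st with
                 | Some [a] => [tr a]
                 | Some [a; b] => [tr a; tr b]
                 | _ => []
                 end).

Lemma step_len st l : step st = Some l -> length l <= 2.
Proof.
  unfold step. destruct closedb; [intros H; inversion H; simpl; lia|].
  destruct pop as [[ps q']|] eqn:E; [|discriminate]. intros H; inversion H; subst.
  rewrite length_map. apply pop_some in E. destruct E as [pre [t [_ [_ E]]]].
  apply apply_task_len in E. tauto.
Qed.

Lemma root_tr st : root (tr st) = fst st.
Proof. reflexivity. Qed.

Lemma children_tr st : children (tr st) = match step st with Some l => map tr l | None => [] end.
Proof.
  simpl. destruct (step st) as [l|] eqn:E; auto.
  apply step_len in E. destruct l as [|a [|b [|c l]]]; simpl in *; auto; lia.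
Qed.

Lemma step_rule st l : step st = Some l -> rule0 (fst st) (map fst l).
Proof.
  unfold step. destruct closedb eqn:C.
  - intros H; inversion H; subst. apply closedb_rule; auto.
  - destruct pop as [[ps q']|] eqn:E; [|discriminate]. intros H; inversion H; subst.
    rewrite map_map. simpl. rewrite map_id. apply pop_some in E.
    destruct E as [pre [t [_ [_ E]]]]. eapply apply_task_rule; eauto.
Qed.

Lemma preproof_coind (P : tree -> Prop) :
  (forall t, P t -> rule (root t) (map root (children t)) /\ forall t', In t' (children t) -> P t') ->
  forall t, P t -> preproof t.
Proof.
  intros H. cofix CIH. intros t Ht. destruct t as [s ts].
  destruct (H _ Ht) as [H1 H2]. constructor.
  - exact H1.
  - intros t' Ht'. apply CIH. apply H2. exact Ht'.
Qed.


Definition run (sg : nat -> state) : Prop :=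
  forall i, (exists l, step (sg i) = Some l /\ In (sg (S i)) l) \/
            (step (sg i) = None /\ sg (S i) = sg i).

Definition applied (sg : nat -> state) (t : task) (i : nat) : Prop :=
  exists ps, apply_task (fst (sg i)) t = Some ps /\ In (fst (sg (S i))) ps.

Lemma run_not_closed sg i : run sg -> closedb (fst (sg i)) = false.
Proof.
  intros Hr. destruct (closedb (fst (sg i))) eqn:E; auto. exfalso.
  destruct (Hr i) as [[l [H1 H2]]|[H1 _]]; unfold step in H1; rewrite E in H1;
   inversion H1; subst; auto.
Qed.

Lemma run_detail sg i : run sg ->
  (step (sg i) = None /\ sg (S i) = sg i /\ forall t, In t (snd (sg i)) -> apply_task (fst (sg i)) t = None) \/
  exists pre t q' ps, snd (sg i) = pre ++ t :: q' /\
    (forall t', In t' pre -> apply_task (fst (sg i)) t' = None) /\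
    apply_task (fst (sg i)) t = Some ps /\ In (fst (sg (S i))) ps /\
    snd (sg (S i)) = q' ++ alltasks (fst (sg (S i))).
Proof.
  intros Hr. pose proof (run_not_closed sg i Hr) as Hc.
  destruct (Hr i) as [[l [H1 H2]]|[H1 H2]].
  - right. unfold step in H1. rewrite Hc in H1.
    destruct (pop (fst (sg i)) (snd (sg i))) as [[ps q']|] eqn:E; [|discriminate].
    inversion H1; subst. apply pop_some in E. destruct E as [pre [t [Hq [Hpre Ht]]]].
    apply in_map_iff in H2. destruct H2 as [s' [Hs' Hin]].
    exists pre, t, q', ps. rewrite <- Hs'. simpl. repeat split; auto.
  - left. repeat split; auto. unfold step in H1. rewrite Hc in H1.
    destruct (pop (fst (sg i)) (snd (sg i))) as [[ps q']|] eqn:E; [discriminate|].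
    apply pop_none; auto.
Qed.

Lemma run_moves sg i : run sg -> sg (S i) = sg i \/ exists t, applied sg t i.
Proof.
  intros Hr. destruct (run_detail sg i Hr) as [[_ [H _]]|[pre [t [q' [ps [_ [_ [H1 [H2 _]]]]]]]]]; auto.
  right. exists t, ps. auto.
Qed.

Lemma q_inv sg : run sg -> incl (alltasks (fst (sg 0))) (snd (sg 0)) ->
  forall i, incl (alltasks (fst (sg i))) (snd (sg i)).
Proof.
  intros Hr H0 i. induction i; auto.
  destruct (run_detail sg i Hr) as [[_ [H _]]|[pre [t [q' [ps [_ [_ [H1 [H2 H3]]]]]]]]].
  - rewrite H; auto.
  - rewrite H3. intros a Ha. apply in_or_app; right; auto.
Qed.

Lemma fairness sg : run sg -> forall N n i t, n < N -> nth_error (snd (sg i)) n = Some t ->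
  exists j, i <= j /\ (apply_task (fst (sg j)) t = None \/ applied sg t j).
Proof.
  intros Hr N. induction N; intros n i t Hn Ht; [lia|].
  destruct (run_detail sg i Hr) as [[_ [_ H]]|[pre [t0 [q' [ps [Hq [Hpre [H1 [H2 H3]]]]]]]]].
  - exists i. split; auto. left. apply H. eapply nth_error_In; eauto.
  - rewrite Hq in Ht. destruct (Nat.lt_ge_cases n (length pre)) as [L|L].
    + rewrite nth_error_app1 in Ht; auto. exists i. split; auto. left. apply Hpre.
      eapply nth_error_In; eauto.
    + rewrite nth_error_app2 in Ht; auto. destruct (n - length pre) as [|m] eqn:Em.
      * simpl in Ht. inversion Ht; subst. exists i. split; auto. right. exists ps. auto.
      * simpl in Ht. destruct (IHN m (S i) t) as [j [Hj Hj']]; [lia| |].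
        -- rewrite H3. rewrite nth_error_app1; auto. apply nth_error_Some. congruence.
        -- exists j. split; [lia|auto].
Qed.

Lemma ev_applied sg t i (P : nat -> Prop) : run sg -> In t (snd (sg i)) -> P i ->
  (forall j, P j -> apply_task (fst (sg j)) t <> None) ->
  (forall j, P j -> ~ P (S j) -> applied sg t j) -> exists m, applied sg t m.
Proof.
  intros Hr Hin HP H1 H2. apply In_nth_error in Hin. destruct Hin as [n Hn].
  destruct (fairness sg Hr (S n) n i t (Nat.lt_succ_diag_r n) Hn) as [j [Hij Hj]].
  assert (Gen : forall d i, P i -> i + d = j -> exists m, applied sg t m).
  { induction d; intros i' HPi E.
    - rewrite Nat.add_0_r in E. subst. destruct Hj as [Hj|Hj]; eauto. exfalso; eapply H1; eauto.
    - destruct (classic (P (S i'))) as [Y|N].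
      + apply (IHd (S i')); auto. lia.
      + eauto. }
  apply (Gen (j - i) i); auto. lia.
Qed.

Lemma applied_effect sg t j : applied sg t j ->
  incl (rels (fst (sg j))) (rels (fst (sg (S j)))) /\
  (forall a, In a (ante (fst (sg j))) -> In a (ante (fst (sg (S j)))) \/
     exists x A B, t = TImpL x A B /\ a = (x, Imp A B)) /\
  (forall a, In a (succ (fst (sg j))) -> In a (succ (fst (sg (S j)))) \/
     (exists x A B, t = TImpR x A B /\ a = (x, Imp A B)) \/
     (exists k x A, t = TModR k x A /\ a = (x, modal k A))).
Proof.
  intros [ps [H1 H2]]. destruct (fst (sg j)) as [R G O]. set (s' := fst (sg (S j))) in *.
  clearbody s'.
  destruct t; simpl in H1;
   repeat match goal with H : context [in_dec ?d ?a ?l] |- _ => destruct (in_dec d a l) end;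
   try discriminate; inversion H1; subst; clear H1; simpl in H2;
   repeat (destruct H2 as [<-|H2]); try contradiction; simpl;
   (split; [intros r Hr; simpl; auto|split]); intros a Ha; simpl; auto.
  - destruct (lform_eq_dec a (x, Imp A B)) as [->|N]; [right; eauto | left; apply in_rm; auto].
  - destruct (lform_eq_dec a (x, Imp A B)) as [->|N]; [right; eauto | left; right; apply in_rm; auto].
  - destruct (lform_eq_dec a (x, Imp A B)) as [->|N]; [right; left; eauto | left; right; apply in_rm; auto].
  - destruct (lform_eq_dec a (x, modal k A)) as [->|N]; [right; right; eauto | left; right; apply in_rm; auto].
Qed.

Lemma run_rels_mono sg i d : run sg -> incl (rels (fst (sg i))) (rels (fst (sg (i + d)))).
Proof.
  intros Hr. induction d.
  - rewrite Nat.add_0_r. apply incl_refl.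
  - replace (i + S d) with (S (i + d)) by lia.
    destruct (run_moves sg (i + d) Hr) as [E|[t Ht]].
    + rewrite E; auto.
    + apply applied_effect in Ht. intros a Ha. apply Ht, IHd, Ha.
Qed.

Lemma run_rels_mono' sg i j : run sg -> i <= j -> incl (rels (fst (sg i))) (rels (fst (sg j))).
Proof. intros Hr H. replace j with (i + (j - i)) by lia. apply run_rels_mono; auto. Qed.

Definition notImp (F : form) : Prop := forall A B, F <> Imp A B.

Lemma run_ante_persist sg i x F : run sg -> notImp F -> In (x, F) (ante (fst (sg i))) ->
  forall j, i <= j -> In (x, F) (ante (fst (sg j))).
Proof.
  intros Hr HF H j Hj. replace j with (i + (j - i)) by lia. induction (j - i) as [|d IH].
  - rewrite Nat.add_0_r; auto.
  - replace (i + S d) with (S (i + d)) by lia.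
    destruct (run_moves sg (i + d) Hr) as [E|[t Ht]].
    + rewrite E; auto.
    + apply applied_effect in Ht. destruct Ht as [_ [Ha _]].
      destruct (Ha _ IH) as [|[x' [A [B [_ E]]]]]; auto. inversion E; subst. exfalso; eapply HF; eauto.
Qed.

Lemma run_succ_persist sg i x F : run sg -> notImp F -> (forall k A, F <> modal k A) ->
  In (x, F) (succ (fst (sg i))) -> forall j, i <= j -> In (x, F) (succ (fst (sg j))).
Proof.
  intros Hr HF HF' H j Hj. replace j with (i + (j - i)) by lia. induction (j - i) as [|d IH].
  - rewrite Nat.add_0_r; auto.
  - replace (i + S d) with (S (i + d)) by lia.
    destruct (run_moves sg (i + d) Hr) as [E|[t Ht]].
    + rewrite E; auto.
    + apply applied_effect in Ht. destruct Ht as [_ [_ Ha]].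
      destruct (Ha _ IH) as [|[[x' [A [B [_ E]]]]|[k [x' [A [_ E]]]]]]; auto;
       inversion E; subst; exfalso; [eapply HF; eauto | eapply HF'; eauto].
Qed.

Lemma run_lt sg : run sg -> rels (fst (sg 0)) = [] ->
  forall i k a b, In (k, a, b) (rels (fst (sg i))) -> a < b.
Proof.
  intros Hr H0 i. induction i; intros k a b H.
  - rewrite H0 in H. contradiction.
  - destruct (run_moves sg i Hr) as [E|[t [ps [H1 H2]]]].
    + rewrite E in H; eauto.
    + destruct (fst (sg i)) as [R G O] eqn:Es. simpl in IHi.
      set (s' := fst (sg (S i))) in *. clearbody s'.
      destruct t; simpl in H1;
       repeat match goal with H : context [in_dec ?d ?a ?l] |- _ => destruct (in_dec d a l) end;
       try discriminate; inversion H1; subst; clear H1; simpl in H2;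
       repeat (destruct H2 as [<-|H2]); try contradiction; simpl in H; eauto.
      * destruct H as [E|H]; eauto. inversion E; subst.
        assert (occurs a (mkSeq R G O)) by (right; right; eexists; eauto).
        apply occurs_le in H. unfold fresh. lia.
      * destruct H as [E|H]; eauto. inversion E; subst.
        pose proof (IHi _ _ _ i0). pose proof (IHi _ _ _ i1). lia.
Qed.


Ltac solve_in_dec :=
  repeat match goal with
         | |- context [in_dec ?d ?a ?l] => destruct (in_dec d a l)
         | H : context [in_dec ?d ?a ?l] |- _ => destruct (in_dec d a l)
         end;
  try discriminate; try contradiction.

Lemma modal_inj k k' A A' : modal k A = modal k' A' -> k = k' /\ A = A'.
Proof. destruct k, k'; simpl; intros H; inversion H; auto. Qed.

Lemma applied_impL sg x A B m : applied sg (TImpL x A B) m ->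
  In (x, A) (succ (fst (sg (S m)))) \/ In (x, B) (ante (fst (sg (S m)))).
Proof.
  intros [ps [H1 H2]]. simpl in H1. destruct in_dec; [|discriminate]. inversion H1; subst.
  destruct H2 as [<-|[<-|[]]]; simpl; auto.
Qed.

Lemma applied_impR sg x A B m : applied sg (TImpR x A B) m ->
  In (x, A) (ante (fst (sg (S m)))) /\ In (x, B) (succ (fst (sg (S m)))).
Proof.
  intros [ps [H1 H2]]. simpl in H1. destruct in_dec; [|discriminate]. inversion H1; subst.
  destruct H2 as [<-|[]]; simpl; auto.
Qed.

Lemma applied_modR sg k x A m : applied sg (TModR k x A) m ->
  exists y, In (k, x, y) (rels (fst (sg (S m)))) /\ In (y, A) (succ (fst (sg (S m)))).
Proof.
  intros [ps [H1 H2]]. simpl in H1. destruct in_dec; [|discriminate]. inversion H1; subst.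
  destruct H2 as [<-|[]]; simpl; eauto.
Qed.

Lemma applied_modL sg k x y A m : applied sg (TModL k x y A) m ->
  In (y, A) (ante (fst (sg (S m)))).
Proof.
  intros [ps [H1 H2]]. simpl in H1. solve_in_dec. inversion H1; subst.
  destruct H2 as [<-|[]]; simpl; eauto.
Qed.

Lemma applied_trans sg k1 k2 x y z m : applied sg (TTrans k1 k2 x y z) m ->
  In (k2, x, z) (rels (fst (sg (S m)))).
Proof.
  intros [ps [H1 H2]]. simpl in H1. solve_in_dec. inversion H1; subst.
  destruct H2 as [<-|[]]; simpl; eauto.
Qed.

Lemma nochain_wf {W} (Rel : rkind -> W -> W -> Prop) :
  (forall c : nat -> W, ~ forall n, exists k, Rel k (c n) (c (S n))) ->
  well_founded (fun a b => exists k, Rel k b a).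
Proof.
  intros Hn a. apply NNPP. intro Na.
  set (Rr := fun a b => exists k, Rel k b a).
  assert (Hnext : forall x : {x | ~ Acc Rr x}, exists y : {x | ~ Acc Rr x},
            exists k, Rel k (proj1_sig x) (proj1_sig y)).
  { intros [x Hx]. simpl. apply NNPP. intro H. apply Hx. constructor. intros y [k Hy].
    apply NNPP. intro Hy'. apply H. exists (exist _ y Hy'). exists k. auto. }
  set (nx := fun x => proj1_sig (constructive_indefinite_description _ (Hnext x))).
  set (c0 := exist (fun x => ~ Acc Rr x) a Na).
  set (c := fun n => proj1_sig (Nat.iter n nx c0)).
  apply (Hn c). intro n. unfold c. simpl.
  exact (proj2_sig (constructive_indefinite_description _ (Hnext (Nat.iter n nx c0)))).
Qed.



Definition MRel (sg : nat -> state) (k : rkind) (a b : label) : Prop :=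
  exists i, In (k, a, b) (rels (fst (sg i))).
Definition MV (sg : nat -> state) (p : nat) (x : label) : Prop :=
  exists i, In (x, Var p) (ante (fst (sg i))).

Lemma core_frame sg : run sg -> rels (fst (sg 0)) = [] ->
  incl (alltasks (fst (sg 0))) (snd (sg 0)) ->
  (forall c : nat -> label, ~ forall n, exists k i, In (k, c n, c (S n)) (rels (fst (sg i)))) ->
  frame (MRel sg).
Proof.
  intros Hr H0 Hq Hc. split.
  - intros k1 k2 x y z [i Hi] [j Hj].
    set (m := Nat.max i j).
    assert (Hi' : forall n, m <= n -> In (k1, x, y) (rels (fst (sg n))))
      by (intros n Hn; apply (run_rels_mono' sg i n Hr); [unfold m in Hn; lia|exact Hi]).
    assert (Hj' : forall n, m <= n -> In (k2, y, z) (rels (fst (sg n))))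
      by (intros n Hn; apply (run_rels_mono' sg j n Hr); [unfold m in Hn; lia|exact Hj]).
    destruct (ev_applied sg (TTrans k1 k2 x y z) m (fun n => m <= n) Hr) as [m' Hm'].
    + apply (q_inv sg Hr Hq). apply at_trans; auto.
    + auto.
    + intros n Hn. simpl. solve_in_dec; try congruence; exfalso;
      match goal with N : ~ In _ _ |- _ => apply N end; auto.
    + intros n Hn Hn'. lia.
    + exists (S m'). eapply applied_trans; eauto.
  - apply nochain_wf. intros c H. apply (Hc c). intro n. destruct (H n) as [k [i Hi]]. eauto.
Qed.

Lemma core_truth sg : run sg -> incl (alltasks (fst (sg 0))) (snd (sg 0)) ->
  forall F i x,
  (In (x, F) (ante (fst (sg i))) -> eval (MRel sg) (MV sg) x F) /\
  (In (x, F) (succ (fst (sg i))) -> ~ eval (MRel sg) (MV sg) x F).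
Proof.
  intros Hr Hq. assert (Hqi := q_inv sg Hr Hq).
  assert (Hmod : forall k A, (forall i x,
     (In (x, A) (ante (fst (sg i))) -> eval (MRel sg) (MV sg) x A) /\
     (In (x, A) (succ (fst (sg i))) -> ~ eval (MRel sg) (MV sg) x A)) ->
     forall i x,
     (In (x, modal k A) (ante (fst (sg i))) -> eval (MRel sg) (MV sg) x (modal k A)) /\
     (In (x, modal k A) (succ (fst (sg i))) -> ~ eval (MRel sg) (MV sg) x (modal k A))).
  { intros k A IH i x. split.
    - intros H. apply eval_modal. intros y [j Hj].
      set (m := Nat.max i j).
      assert (Hi' : forall n, m <= n -> In (x, modal k A) (ante (fst (sg n)))).
      { intros n Hn. apply (run_ante_persist sg i); auto; [|unfold m in Hn; lia].
        intros B C E. destruct k; discriminate. }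
      assert (Hj' : forall n, m <= n -> In (k, x, y) (rels (fst (sg n))))
        by (intros n Hn; apply (run_rels_mono' sg j n Hr); [unfold m in Hn; lia|exact Hj]).
      destruct (ev_applied sg (TModL k x y A) m (fun n => m <= n) Hr) as [m' Hm'].
      + apply Hqi. apply at_modL; auto.
      + auto.
      + intros n Hn. simpl. solve_in_dec; try congruence; exfalso;
        match goal with N : ~ In _ _ |- _ => apply N end; auto.
      + intros n Hn Hn'. lia.
      + apply (IH (S m')). eapply applied_modL; eauto.
    - intros H. destruct (ev_applied sg (TModR k x A) i (fun n => In (x, modal k A) (succ (fst (sg n)))) Hr)
        as [m Hm].
      + apply Hqi. apply at_modR; auto.
      + auto.
      + intros n Hn. simpl. solve_in_dec.
      + intros n Hn Hn'. destruct (run_moves sg n Hr) as [E|[t Ht]].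
        * rewrite E in Hn'. contradiction.
        * pose proof (proj2 (proj2 (applied_effect _ _ _ Ht)) _ Hn) as [E|[[x' [B [C [_ E]]]]|[k' [x' [B [Et E]]]]]].
          -- contradiction.
          -- inversion E. destruct k; discriminate.
          -- inversion E; subst. apply modal_inj in H2. destruct H2; subst. exact Ht.
      + destruct (applied_modR _ _ _ _ _ Hm) as [y [Hy1 Hy2]].
        intro HE. rewrite eval_modal in HE. apply (proj2 (IH (S m) y) Hy2). apply HE. exists (S m). auto. }
  intros F. induction F; intros i x.
  - split; intros H; [|simpl; tauto]. exfalso. eapply closedb_false_bot; [apply run_not_closed; eauto|eauto].
  - split; intros H; simpl; [exists i; auto|]. intros [j Hj].
    set (m := Nat.max i j).
    apply (closedb_false_id (fst (sg m)) x n); [apply run_not_closed; eauto| |].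
    + apply (run_ante_persist sg j); auto; [intros B C E; discriminate|unfold m; lia].
    + apply (run_succ_persist sg i); auto; [intros B C E; discriminate|intros k B E; destruct k; discriminate|unfold m; lia].
  - split; intros H.
    + destruct (ev_applied sg (TImpL x F1 F2) i (fun n => In (x, Imp F1 F2) (ante (fst (sg n)))) Hr)
        as [m Hm].
      * apply Hqi. apply at_impL; auto.
      * auto.
      * intros n Hn. simpl. solve_in_dec.
      * intros n Hn Hn'. destruct (run_moves sg n Hr) as [E|[t Ht]].
        -- rewrite E in Hn'. contradiction.
        -- pose proof (proj1 (proj2 (applied_effect _ _ _ Ht)) _ Hn) as [E|[x' [B [C [Et E]]]]].
           ++ contradiction.
           ++ inversion E; subst. exact Ht.
      * simpl. intros HA. destruct (applied_impL _ _ _ _ _ Hm) as [Ha|Hb].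
        -- exfalso. apply (proj2 (IHF1 (S m) x) Ha HA).
        -- apply (proj1 (IHF2 (S m) x) Hb).
    + destruct (ev_applied sg (TImpR x F1 F2) i (fun n => In (x, Imp F1 F2) (succ (fst (sg n)))) Hr)
        as [m Hm].
      * apply Hqi. apply at_impR; auto.
      * auto.
      * intros n Hn. simpl. solve_in_dec.
      * intros n Hn Hn'. destruct (run_moves sg n Hr) as [E|[t Ht]].
        -- rewrite E in Hn'. contradiction.
        -- pose proof (proj2 (proj2 (applied_effect _ _ _ Ht)) _ Hn) as [E|[[x' [B [C [Et E]]]]|[k' [x' [B [Et E]]]]]].
           ++ contradiction.
           ++ inversion E; subst. exact Ht.
           ++ inversion E. destruct k'; discriminate.
      * simpl. destruct (applied_impR _ _ _ _ _ Hm) as [Ha Hb]. intros HE.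
        apply (proj2 (IHF2 (S m) x) Hb). apply HE. apply (proj1 (IHF1 (S m) x) Ha).
  - apply (Hmod KR F IHF).
  - apply (Hmod KS F IHF).
Qed.

Lemma core sg x0 A : run sg -> fst (sg 0) = mkSeq [] [] [(x0, A)] ->
  incl (alltasks (fst (sg 0))) (snd (sg 0)) ->
  (forall c : nat -> label, ~ forall n, exists k i, In (k, c n, c (S n)) (rels (fst (sg i)))) ->
  valid A -> False.
Proof.
  intros Hr H0 Hq Hc HV.
  assert (Hfr : frame (MRel sg)) by (apply core_frame; auto; rewrite H0; auto).
  pose proof (HV label (MRel sg) (MV sg) Hfr x0) as HE.
  apply (proj2 (core_truth sg Hr Hq A 0 x0)); auto. rewrite H0. simpl. auto.
Qed.


Fixpoint TT (e : nat -> nat) (n : nat) : nat :=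
  match n with 0 => e 0 | S n => Nat.max (S (TT e n)) (e (S n)) end.
Fixpoint PP (T : nat -> nat) (i : nat) : nat :=
  match i with 0 => 0 | S i => if Nat.eqb i (T (PP T i)) then S (PP T i) else PP T i end.

Lemma chain_trace (rl : nat -> list ratom) (c : nat -> label) :
  (forall i, incl (rl i) (rl (S i))) ->
  (forall n, exists k i, In (k, c n, c (S n)) (rl i)) ->
  (forall n, c n < c (S n)) ->
  exists x : nat -> label, (forall i, x (S i) = x i \/ exists k, In (k, x i, x (S i)) (rl i)) /\
    progressing x.
Proof.
  intros Hmono Hch Hinc.
  assert (Hm : forall i d, incl (rl i) (rl (i + d))).
  { intros i d. induction d; [rewrite Nat.add_0_r; apply incl_refl|].
    replace (i + S d) with (S (i + d)) by lia. intros a Ha; apply Hmono, IHd, Ha. }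
  assert (Hm' : forall i j, i <= j -> incl (rl i) (rl j)).
  { intros i j H. replace j with (i + (j - i)) by lia. apply Hm. }
  assert (He : forall n, exists p : rkind * nat, In (fst p, c n, c (S n)) (rl (snd p))).
  { intro n. destruct (Hch n) as [k [i H]]. exists (k, i); auto. }
  set (e := fun n => proj1_sig (constructive_indefinite_description _ (He n))).
  assert (Hev : forall n, In (fst (e n), c n, c (S n)) (rl (snd (e n)))).
  { intro n. exact (proj2_sig (constructive_indefinite_description _ (He n))). }
  set (T := TT (fun n => snd (e n))).
  assert (HT1 : forall n, snd (e n) <= T n) by (intros [|n]; unfold T; cbn [TT]; lia).
  assert (HT2 : forall n, S (T n) <= T (S n)) by (intros n; unfold T; cbn [TT]; lia).
  set (p := PP T).
  assert (Hp0 : forall i, i <= T (p i)).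
  { induction i; [lia|]. unfold p; simpl; fold p. destruct (Nat.eqb i (T (p i))) eqn:E.
    - apply Nat.eqb_eq in E. specialize (HT2 (p i)). lia.
    - apply Nat.eqb_neq in E. lia. }
  assert (Hjump : forall d i, T (p i) = i + d -> p (S (i + d)) = S (p i)).
  { induction d; intros i H.
    - rewrite Nat.add_0_r in *. unfold p; simpl; fold p. rewrite H, Nat.eqb_refl. auto.
    - assert (Hs : p (S i) = p i).
      { unfold p; simpl; fold p. destruct (Nat.eqb i (T (p i))) eqn:E; auto. apply Nat.eqb_eq in E. lia. }
      replace (S (i + S d)) with (S (S i + d)) by lia. rewrite IHd; [congruence|].
      rewrite Hs. lia. }
  assert (Hcinc : forall a b, a < b -> c a < c b).
  { intros a b H. induction H; [apply Hinc|]. specialize (Hinc m). lia. }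
  exists (fun i => c (p i)). split.
  - intro i. destruct (Nat.eqb i (T (p i))) eqn:E.
    + right. assert (Hps : p (S i) = S (p i)).
      { unfold p; cbn [PP]; fold p. rewrite E. auto. }
      rewrite Hps. apply Nat.eqb_eq in E. exists (fst (e (p i))).
      apply (Hm' (snd (e (p i)))); [pose proof (HT1 (p i)); lia|]. exact (Hev (p i)).
    + left. unfold p; cbn [PP]; fold p. rewrite E. auto.
  - intros [n Hn]. specialize (Hjump (T (p n) - n) n).
    replace (n + (T (p n) - n)) with (T (p n)) in Hjump by (specialize (Hp0 n); lia).
    specialize (Hjump eq_refl).
    specialize (Hn (S (T (p n)))). rewrite Hjump in Hn.
    assert (n <= S (T (p n))) by (specialize (Hp0 n); lia).
    specialize (Hn H). specialize (Hinc (p n)). lia.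
Qed.

Definition st0 (A : form) : state :=
  (mkSeq [] [] [(0, A)], alltasks (mkSeq [] [] [(0, A)])).

Definition reach (A : form) (st : state) : Prop :=
  exists sg n, sg 0 = st0 A /\ (forall i, i < n -> exists l, step (sg i) = Some l /\ In (sg (S i)) l) /\
    sg n = st.

Lemma reach_step A st l st' : reach A st -> step st = Some l -> In st' l -> reach A st'.
Proof.
  intros [sg [n [H0 [Hs Hn]]]] Hst Hin.
  exists (fun i => if Nat.leb i n then sg i else st'), (S n). split; [|split].
  - exact H0.
  - intros i Hi. destruct (Nat.eq_dec i n) as [->|N].
    + rewrite Nat.leb_refl. replace (Nat.leb (S n) n) with false by (symmetry; apply Nat.leb_gt; lia).
      exists l. rewrite Hn. auto.
    + replace (Nat.leb i n) with true by (symmetry; apply Nat.leb_le; lia).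
      replace (Nat.leb (S i) n) with true by (symmetry; apply Nat.leb_le; lia). apply Hs. lia.
  - replace (Nat.leb (S n) n) with false by (symmetry; apply Nat.leb_gt; lia). auto.
Qed.

Lemma reach_not_stuck A st : valid A -> reach A st -> step st <> None.
Proof.
  intros HV [sg [n [H0 [Hs Hn]]]] Hst.
  set (sg' := fun i => if Nat.leb i n then sg i else st).
  assert (E1 : forall i, n <= i -> sg' i = st).
  { intros i Hi. unfold sg'. destruct (Nat.leb i n) eqn:E; auto.
    apply Nat.leb_le in E. replace i with n by lia. auto. }
  assert (Hr : run sg').
  { intros i. destruct (Nat.lt_ge_cases i n) as [L|L].
    - left. unfold sg'. replace (Nat.leb i n) with true by (symmetry; apply Nat.leb_le; lia).
      replace (Nat.leb (S i) n) with true by (symmetry; apply Nat.leb_le; lia). apply Hs; auto.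
    - right. rewrite !E1; auto. }
  assert (Hz : sg' 0 = st0 A) by (unfold sg'; simpl; auto).
  apply (core sg' 0 A Hr); auto.
  - rewrite Hz. auto.
  - rewrite Hz. apply incl_refl.
  - intros c Hc.
    assert (Hb : forall i, incl (rels (fst (sg' i))) (rels (fst st))).
    { intros i. rewrite <- (E1 (Nat.max i n)) by lia. apply run_rels_mono'; auto. lia. }
    assert (Hlt := run_lt sg' Hr). rewrite Hz in Hlt. specialize (Hlt eq_refl).
    assert (Hci : forall m, c m < c (S m)).
    { intros m. destruct (Hc m) as [k [i Hi]]. eapply Hlt; eauto. }
    assert (Hge : forall m, m <= c m) by (induction m; [lia|specialize (Hci m); lia]).
    set (M := maxl (labels (fst st))).
    destruct (Hc M) as [k [i Hi]]. apply Hb in Hi.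
    assert (occurs (c (S M)) (fst st)) by (left; exists k, (c M), (c (S M)); auto).
    apply occurs_le in H. specialize (Hge (S M)). unfold M in *. lia.
Qed.

Lemma child_inv st t' : In t' (children (tr st)) ->
  exists st' l, step st = Some l /\ In st' l /\ t' = tr st'.
Proof.
  rewrite children_tr. destruct (step st) as [l|]; [|simpl; tauto].
  intros H. apply in_map_iff in H. destruct H as [st' [<- H]]. eauto.
Qed.

Lemma branch_progress A b : valid A -> branch (tr (st0 A)) b ->
  exists x, trace b x /\ progressing x.
Proof.
  intros HV [Hb0 Hbs]. apply NNPP. intro N.
  assert (Hex : forall i st, exists st', b i = tr st ->
              b (S i) = tr st' /\ exists l, step st = Some l /\ In st' l).
  { intros i st. destruct (classic (b i = tr st)) as [E|E].
    - specialize (Hbs i). rewrite E in Hbs. destruct (child_inv _ _ Hbs) as [st' [l [H1 [H2 H3]]]].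
      exists st'. intros _. eauto.
    - exists st. tauto. }
  set (nx := fun i st => proj1_sig (constructive_indefinite_description _ (Hex i st))).
  assert (Hnx : forall i st, b i = tr st -> b (S i) = tr (nx i st) /\
                 exists l, step st = Some l /\ In (nx i st) l).
  { intros i st. exact (proj2_sig (constructive_indefinite_description _ (Hex i st))). }
  set (sg := fix sg i := match i with 0 => st0 A | S i => nx i (sg i) end).
  assert (Hbs' : forall i, b i = tr (sg i)).
  { induction i; simpl; auto. apply Hnx. auto. }
  assert (Hr : run sg).
  { intros i. left. apply (Hnx i (sg i) (Hbs' i)). }
  apply (core sg 0 A Hr); auto.
  - apply incl_refl.
  - intros c Hc. apply N.
    assert (Hlt := run_lt sg Hr eq_refl).
    destruct (chain_trace (fun i => rels (fst (sg i))) c) as [x [Hx1 Hx2]].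
    + intros i. apply (run_rels_mono' sg i (S i) Hr). lia.
    + exact Hc.
    + intros m. destruct (Hc m) as [k [i Hi]]. eapply Hlt; eauto.
    + exists x. split; auto. intro i. rewrite Hbs'. apply Hx1.
Qed.

Lemma Forall2_seq_perm_refl l : Forall2 seq_perm l l.
Proof. induction l; constructor; auto. repeat split; apply Permutation_refl. Qed.

Lemma valid_labCS A : valid A -> labCS_provable A.
Proof.
  intros HV. exists (tr (st0 A)), 0. split; [split|reflexivity].
  - apply (preproof_coind (fun t => exists st, t = tr st /\ reach A st)).
    + intros t [st [-> Hr]]. destruct (step st) as [l|] eqn:E;
        [|exfalso; eapply reach_not_stuck; eauto].
      split.
      * exists (map fst l). split.
        -- rewrite root_tr. apply step_rule; auto.
        -- rewrite children_tr, E, map_map. apply Forall2_seq_perm_refl.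
      * intros t' Ht'. rewrite children_tr, E in Ht'. apply in_map_iff in Ht'.
        destruct Ht' as [st' [<- H]]. exists st'. split; auto. eapply reach_step; eauto.
    + exists (st0 A). split; auto. exists (fun _ => st0 A), 0. repeat split; auto. intros; lia.
  - intros b Hb. eapply branch_progress; eauto.
Qed.


Theorem corollary2 : forall A : form, CS A <-> labCS_provable A.
Proof.
  intros A. split.
  - intros H. apply valid_labCS. apply CS_valid. exact H.
  - intros H. apply valid_CS. apply labCS_valid. exact H.
Qed.
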